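(* Let $\Phi$ be a Young function such that the limits $p_0=\lim_{t\to0^+}\frac{t\Phi'(t)}{\Phi(t)}$ and $p_\infty=\lim_{t\to\infty}\frac{t\Phi'(t)}{\Phi(t)}$ exist as finite real numbers. Let $p=\max\{p_0,p_\infty\}$ and $q=\min\{p_0,p_\infty\}$. Then for every $\varepsilon>0$ there exists a Young function $\Psi$ equivalent to $\Phi$ with $p\le p_\Psi<p+\varepsilon$ and $q-\varepsilon<q_\Psi\le q$.
   Context: A Young function is a convex function $\Phi:[0,\infty)\to[0,\infty)$ with $\Phi(0)=0$, $\Phi(t)>0$ for $t>0$, and $\lim_{t\to\infty}\Phi(t)=\infty$. $\Phi'$ denotes the right derivative of $\Phi$. The Lebesgue exponents of $\Phi$ are $p_\Phi=\sup_{t>0}\frac{t\Phi'(t)}{\Phi(t)}$ and $q_\Phi=\inf_{t>0}\frac{t\Phi'(t)}{\Phi(t)}$. Two Young functions $\Phi,\Psi$ are equivalent if there is $C\ge1$ with $C^{-1}\Psi(t)\le\Phi(t)\le C\Psi(t)$ for all $t\ge0$. *)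

(* Defs.v *)
From Stdlib Require Import Reals.
From Coquelicot Require Import Coquelicot.
Open Scope R_scope.

Definition is_right_deriv (Phi : R -> R) (t l : R) : Prop :=
  filterlim (fun h => (Phi (t + h) - Phi t) / h) (at_right 0) (locally l).

(* Young function on [0,oo) (values of Phi on negative reals are irrelevant). *)
Definition young (Phi : R -> R) : Prop :=
  (forall x y lam, 0 <= x -> 0 <= y -> 0 <= lam <= 1 ->
     Phi (lam * x + (1 - lam) * y) <= lam * Phi x + (1 - lam) * Phi y)
  /\ Phi 0 = 0
  /\ (forall t, 0 < t -> 0 < Phi t)
  /\ filterlim Phi (Rbar_locally p_infty) (Rbar_locally p_infty).

Definition lquot (Phi dPhi : R -> R) (t : R) : R := t * dPhi t / Phi t.

Definition p_exp (Phi dPhi : R -> R) : Rbar :=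
  Lub_Rbar (fun x => exists t, 0 < t /\ x = lquot Phi dPhi t).
Definition q_exp (Phi dPhi : R -> R) : Rbar :=
  Glb_Rbar (fun x => exists t, 0 < t /\ x = lquot Phi dPhi t).

Definition young_equiv (Phi Psi : R -> R) : Prop :=
  exists C, 1 <= C /\
    forall t, 0 <= t -> / C * Psi t <= Phi t /\ Phi t <= C * Psi t.

(* Main.v *)
Require Import Defs.
From Stdlib Require Import Reals Lra Psatz.
From Coquelicot Require Import Coquelicot.
Open Scope R_scope.

Lemma ar0_intro (g : R -> R) l :
  (forall eps, 0 < eps -> exists d, 0 < d /\ forall h, 0 < h < d -> Rabs (g h - l) < eps) ->
  filterlim g (at_right 0) (locally l).
Proof.
  intros H P [eps HP].
  destruct (H eps (cond_pos eps)) as [d [Hd Hh]].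
  exists (mkposreal d Hd). intros y Hy Hy0. apply HP.
  change (Rabs (g y - l) < eps). apply Hh. split; auto.
  change (Rabs (y - 0) < d) in Hy. rewrite Rminus_0_r in Hy.
  apply Rabs_lt_between in Hy. lra.
Qed.

Lemma ar0_elim (g : R -> R) l :
  filterlim g (at_right 0) (locally l) ->
  forall eps, 0 < eps -> exists d, 0 < d /\ forall h, 0 < h < d -> Rabs (g h - l) < eps.
Proof.
  intros H eps He.
  destruct (H (ball l (mkposreal eps He)) (locally_ball _ _)) as [d Hd].
  exists d. split. apply cond_pos. intros h Hh. apply (Hd h).
  change (Rabs (h - 0) < d). rewrite Rminus_0_r. rewrite Rabs_pos_eq; lra. lra.
Qed.

Lemma pinf_elim (g : R -> R) l :
  filterlim g (Rbar_locally p_infty) (locally l) ->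
  forall eps, 0 < eps -> exists N, forall t, N < t -> Rabs (g t - l) < eps.
Proof.
  intros H eps He.
  destruct (H (ball l (mkposreal eps He)) (locally_ball _ _)) as [N HN].
  exists N. intros t Ht. apply (HN t Ht).
Qed.

Lemma grow_elim (f : R -> R) :
  filterlim f (Rbar_locally p_infty) (Rbar_locally p_infty) ->
  forall B, exists N, forall t, N < t -> B < f t.
Proof.
  intros H B.
  destruct (H (fun y => B < y)) as [N HN]. exists B. auto.
  exists N. auto.
Qed.

Lemma grow_intro (f : R -> R) :
  (forall B, exists N, forall t, N < t -> B < f t) ->
  filterlim f (Rbar_locally p_infty) (Rbar_locally p_infty).
Proof.
  intros H P [B HB]. destruct (H B) as [N HN]. exists N. intros t Ht.
  apply HB. auto.
Qed.

Lemma ev_ar0 (P : R -> Prop) d : 0 < d -> (forall h, 0 < h < d -> P h) -> at_right 0 P.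
Proof.
  intros Hd H. exists (mkposreal d Hd). intros y Hy Hy0. apply H.
  change (Rabs (y - 0) < d) in Hy. rewrite Rminus_0_r in Hy.
  apply Rabs_lt_between in Hy. lra.
Qed.

Definition conv3 (f : R -> R) x y z := (f y - f x) * (z - y) <= (f z - f y) * (y - x).
Definition convR (f : R -> R) lo := forall x y z, lo <= x -> x < y -> y < z -> conv3 f x y z.

Lemma divle a c u w : 0 < u -> 0 < w -> a * w <= c * u -> a / u <= c / w.
Proof.
  intros Hu Hw H.
  replace (a/u) with ((a*w) * / (u*w)) by (field; lra).
  replace (c/w) with ((c*u) * / (u*w)) by (field; lra).
  apply Rmult_le_compat_r; [|auto].
  apply Rlt_le, Rinv_0_lt_compat, Rmult_lt_0_compat; auto.
Qed.

Lemma young_convR (f : R -> R) :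
  (forall x y lam, 0 <= x -> 0 <= y -> 0 <= lam <= 1 ->
     f (lam * x + (1 - lam) * y) <= lam * f x + (1 - lam) * f y) -> convR f 0.
Proof.
  intros H x y z Hx Hxy Hyz. unfold conv3.
  set (lam := (z - y) / (z - x)).
  assert (Hl : 0 <= lam <= 1).
  { unfold lam. split. apply Rmult_le_pos; [lra|]. apply Rlt_le, Rinv_0_lt_compat; lra.
    apply (Rmult_le_reg_r (z - x)); [lra|]. unfold Rdiv. rewrite Rmult_assoc, Rinv_l; lra. }
  assert (Hy : lam * x + (1 - lam) * z = y). { unfold lam. field. lra. }
  specialize (H x z lam Hx ltac:(lra) Hl). rewrite Hy in H.
  assert (E1 : lam * (z - x) = z - y). { unfold lam. field. lra. }
  assert (E2 : (1 - lam) * (z - x) = y - x). { unfold lam. field. lra. }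
  assert (H' : f y * (z - x) <= lam * (z - x) * f x + (1 - lam) * (z - x) * f z).
  { replace (lam * (z - x) * f x + (1 - lam) * (z - x) * f z) with
      ((lam * f x + (1 - lam) * f z) * (z - x)) by ring.
    apply Rmult_le_compat_r; lra. }
  rewrite E1, E2 in H'. nra.
Qed.

Lemma convR_young (f : R -> R) : convR f 0 ->
  (forall x y lam, 0 <= x -> 0 <= y -> 0 <= lam <= 1 ->
     f (lam * x + (1 - lam) * y) <= lam * f x + (1 - lam) * f y).
Proof.
  intros H.
  assert (K : forall x y lam, 0 <= x -> x < y -> 0 < lam < 1 ->
     f (lam * x + (1 - lam) * y) <= lam * f x + (1 - lam) * f y).
  { intros x y lam Hx Hxy Hl. set (z := lam * x + (1 - lam) * y).
    assert (Hxz : x < z) by (unfold z; nra). assert (Hzy : z < y) by (unfold z; nra).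
    specialize (H x z y Hx Hxz Hzy). unfold conv3 in H.
    replace (y - z) with (lam * (y - x)) in H by (unfold z; ring).
    replace (z - x) with ((1 - lam) * (y - x)) in H by (unfold z; ring).
    assert (H2 : (f z - f x) * lam <= (f y - f z) * (1 - lam)).
    { apply (Rmult_le_reg_r (y - x)); [lra|]. nra. }
    nra. }
  intros x y lam Hx Hy Hl.
  destruct (Req_dec lam 0) as [->|Hl0].
  { replace (0 * x + (1 - 0) * y) with y by ring. lra. }
  destruct (Req_dec lam 1) as [->|Hl1].
  { replace (1 * x + (1 - 1) * y) with x by ring. lra. }
  destruct (Rtotal_order x y) as [Hxy|[Hxy|Hxy]].
  - apply K; lra.
  - subst. replace (lam * y + (1 - lam) * y) with y by ring. lra.
  - specialize (K y x (1 - lam) Hy Hxy ltac:(lra)).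
    replace (lam * x + (1 - lam) * y) with ((1 - lam) * y + (1 - (1 - lam)) * x) by ring.
    lra.
Qed.

Definition glue (f g : R -> R) b := fun t => if Rle_dec t b then f t else g t.

Lemma glue_l f g b t : t <= b -> glue f g b t = f t.
Proof. intros H; unfold glue; destruct (Rle_dec t b); tauto. Qed.
Lemma glue_r f g b t : b < t -> glue f g b t = g t.
Proof. intros H; unfold glue; destruct (Rle_dec t b); [lra|auto]. Qed.
Lemma glue_r' f g b t : f b = g b -> b <= t -> glue f g b t = g t.
Proof. intros E H; unfold glue; destruct (Rle_dec t b); [|auto].
  replace t with b by lra. auto. Qed.

Lemma glue_conv f g b lo : lo < b -> convR f lo -> convR g b -> f b = g b ->
  (forall x z, lo <= x -> x < b -> b < z -> (f b - f x) * (z - b) <= (g z - g b) * (b - x)) ->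
  convR (glue f g b) lo.
Proof.
  intros Hlb Hf Hg E Hc x y z Hx Hxy Hyz. unfold conv3.
  destruct (Rle_dec z b) as [Hz|Hz].
  { rewrite !glue_l by lra. apply Hf; lra. }
  destruct (Rle_dec b x) as [Hbx|Hbx].
  { rewrite !(glue_r' f g b) by lra. apply Hg; lra. }
  rewrite (glue_l f g b x) by lra. rewrite (glue_r f g b z) by lra.
  destruct (Rle_dec y b) as [Hy|Hy].
  - rewrite glue_l by lra.
    destruct (Req_dec y b) as [->|Hyb].
    { pose proof (Hc x z Hx Hxy Hyz) as Hc'. rewrite <- E in Hc'. exact Hc'. }
    assert (H1 := Hf x y b Hx Hxy ltac:(lra)). unfold conv3 in H1.
    assert (H2 := Hc y z ltac:(lra) ltac:(lra) ltac:(lra)).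
    apply (Rmult_le_reg_r (b - y)); [lra|].
    assert (A1 : (f y - f x) * (b - y) * (z - y) <= (f b - f y) * (y - x) * (z - y))
      by (apply Rmult_le_compat_r; lra).
    assert (A2 : (f b - f y) * (z - b) * (y - x) <= (g z - g b) * (b - y) * (y - x))
      by (apply Rmult_le_compat_r; lra).
    rewrite E in *. nra.
  - rewrite glue_r by lra.
    assert (H1 := Hg b y z ltac:(lra) ltac:(lra) ltac:(lra)). unfold conv3 in H1.
    assert (H2 := Hc x y ltac:(lra) ltac:(lra) ltac:(lra)).
    apply (Rmult_le_reg_r (y - b)); [lra|].
    assert (A1 : (g y - g b) * (z - y) * (y - x) <= (g z - g y) * (y - b) * (y - x))
      by (apply Rmult_le_compat_r; lra).
    assert (A2 : (f b - f x) * (y - b) * (z - y) <= (g y - g b) * (b - x) * (z - y))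
      by (apply Rmult_le_compat_r; lra).
    rewrite E in *. nra.
Qed.

Lemma lim_ge (g : R -> R) l c : filterlim g (at_right 0) (locally l) ->
  at_right 0 (fun h => c <= g h) -> c <= l.
Proof.
  intros Hg Hev.
  assert (R1 := filterlim_le (F := at_right 0) (fun _ => c) g c l Hev).
  simpl in R1. apply R1. apply filterlim_const. exact Hg.
Qed.

Lemma lim_le (g : R -> R) l c : filterlim g (at_right 0) (locally l) ->
  at_right 0 (fun h => g h <= c) -> l <= c.
Proof.
  intros Hg Hev.
  assert (R1 := filterlim_le (F := at_right 0) g (fun _ => c) l c Hev).
  simpl in R1. apply R1. exact Hg. apply filterlim_const.
Qed.

Lemma rd_left f lo x b D : convR f lo -> lo <= x -> x < b ->
  is_right_deriv f b D -> f b - f x <= D * (b - x).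
Proof.
  intros Hf Hx Hxb HD.
  assert ((f b - f x) / (b - x) <= D).
  { apply (lim_ge _ _ _ HD). apply (ev_ar0 _ 1); [lra|]. intros h Hh.
    apply divle; try lra. specialize (Hf x b (b + h) Hx Hxb ltac:(lra)).
    unfold conv3 in Hf. replace (b + h - b) with h in Hf by ring. lra. }
  apply (Rmult_le_reg_r (/ (b - x))). apply Rinv_0_lt_compat; lra.
  replace (D * (b - x) * / (b - x)) with D by (field; lra). exact H.
Qed.

Lemma rd_right f lo z b D : convR f lo -> lo <= b -> b < z ->
  is_right_deriv f b D -> D * (z - b) <= f z - f b.
Proof.
  intros Hf Hx Hxb HD.
  assert (D <= (f z - f b) / (z - b)).
  { apply (lim_le _ _ _ HD). apply (ev_ar0 _ (z - b)); [lra|]. intros h Hh.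
    apply divle; try lra. specialize (Hf b (b + h) z Hx ltac:(lra) ltac:(lra)).
    unfold conv3 in Hf. replace (b + h - b) with h in Hf by ring. nra. }
  apply (Rmult_le_reg_r (/ (z - b))). apply Rinv_0_lt_compat; lra.
  replace (D * (z - b) * / (z - b)) with D by (field; lra).
  replace ((f z - f b) * / (z - b)) with ((f z - f b) / (z - b)) by reflexivity. exact H.
Qed.

Lemma rd_ext_ev f g t D d : 0 < d -> (forall h, 0 <= h < d -> f (t + h) = g (t + h)) ->
  is_right_deriv f t D -> is_right_deriv g t D.
Proof.
  intros Hd E H. unfold is_right_deriv in *.
  apply (filterlim_ext_loc (fun h => (f (t + h) - f t) / h)); auto.
  apply (ev_ar0 _ d Hd). intros h Hh. rewrite E by lra.
  replace t with (t + 0) at 2 4 by ring. rewrite E by lra. reflexivity.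
Qed.

Lemma rd_glue_left f g b t D : t < b -> is_right_deriv f t D -> is_right_deriv (glue f g b) t D.
Proof.
  intros Ht H. apply (rd_ext_ev f _ t D (b - t)); [lra| |auto].
  intros h Hh. rewrite glue_l by lra. auto.
Qed.

Lemma rd_glue_right f g b t D : b <= t -> f b = g b -> is_right_deriv g t D ->
  is_right_deriv (glue f g b) t D.
Proof.
  intros Ht E H. apply (rd_ext_ev g _ t D 1); [lra| |auto].
  intros h Hh. rewrite glue_r' by (auto; lra). auto.
Qed.

Lemma rd_scale f t D K : is_right_deriv f t D -> is_right_deriv (fun s => K * f s) t (K * D).
Proof.
  intros H. apply ar0_intro. intros eps He.
  destruct (ar0_elim _ _ H (eps / (Rabs K + 1))) as [d [Hd Hh]].
  { apply Rdiv_lt_0_compat; auto. pose proof (Rabs_pos K); lra. }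
  exists d; split; auto. intros h Hh'. specialize (Hh h Hh').
  replace ((K * f (t + h) - K * f t) / h - K * D) with (K * ((f (t + h) - f t) / h - D))
    by (field; lra).
  rewrite Rabs_mult. pose proof (Rabs_pos K).
  pose proof (Rabs_pos ((f (t + h) - f t) / h - D)).
  apply (Rle_lt_trans _ ((Rabs K + 1) * Rabs ((f (t + h) - f t) / h - D))). nra.
  apply (Rmult_lt_reg_l (/ (Rabs K + 1))). apply Rinv_0_lt_compat; lra.
  rewrite <- Rmult_assoc, Rinv_l by lra. rewrite Rmult_1_l.
  replace (/ (Rabs K + 1) * eps) with (eps / (Rabs K + 1)) by (unfold Rdiv; ring). auto.
Qed.

Lemma rd_line b e t : is_right_deriv (fun s => b * (s - e)) t b.
Proof.
  apply ar0_intro. intros eps He. exists 1. split; [lra|]. intros h Hh.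
  replace ((b * (t + h - e) - b * (t - e)) / h - b) with 0 by (field; lra).
  rewrite Rabs_R0. auto.
Qed.

Lemma rd_pow c t : 0 < t -> is_right_deriv (fun s => Rpower s c) t (c * Rpower t (c - 1)).
Proof.
  intros Ht. apply ar0_intro. intros eps He.
  destruct (derivable_pt_lim_power t c Ht eps He) as [d Hd].
  exists d. split. apply cond_pos. intros h Hh. apply Hd. lra.
  rewrite Rabs_pos_eq; lra.
Qed.

Lemma convR_scale f lo K : 0 <= K -> convR f lo -> convR (fun s => K * f s) lo.
Proof.
  intros HK Hf x y z Hx Hxy Hyz. specialize (Hf x y z Hx Hxy Hyz). unfold conv3 in *.
  replace ((K * f y - K * f x) * (z - y)) with (K * ((f y - f x) * (z - y))) by ring.
  replace ((K * f z - K * f y) * (y - x)) with (K * ((f z - f y) * (y - x))) by ring.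
  apply Rmult_le_compat_l; auto.
Qed.

Lemma convR_line b e lo : convR (fun s => b * (s - e)) lo.
Proof. intros x y z _ _ _. unfold conv3. right. ring. Qed.

Lemma convR_pow c lo : 0 < lo -> 1 <= c -> convR (fun s => Rpower s c) lo.
Proof.
  intros Hlo Hc x y z Hx Hxy Hyz. unfold conv3.
  destruct (MVT_cor2 (fun s => Rpower s c) (fun s => c * Rpower s (c - 1)) x y Hxy)
    as [u [Hu1 Hu2]].
  { intros r Hr. apply derivable_pt_lim_power. lra. }
  destruct (MVT_cor2 (fun s => Rpower s c) (fun s => c * Rpower s (c - 1)) y z Hyz)
    as [w [Hw1 Hw2]].
  { intros r Hr. apply derivable_pt_lim_power. lra. }
  rewrite Hu1, Hw1.
  assert (Rpower u (c - 1) <= Rpower w (c - 1)).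
  { apply Rle_Rpower_l; lra. }
  assert (0 <= c * Rpower u (c - 1)) by (unfold Rpower; pose proof (exp_pos ((c-1) * ln u)); nra).
  assert (c * Rpower u (c - 1) <= c * Rpower w (c - 1)) by nra.
  replace (c * Rpower u (c - 1) * (y - x) * (z - y)) with (c * Rpower u (c - 1) * ((y - x) * (z - y))) by ring.
  replace (c * Rpower w (c - 1) * (z - y) * (y - x)) with (c * Rpower w (c - 1) * ((y - x) * (z - y))) by ring.
  apply Rmult_le_compat_r; [|auto]. apply Rmult_le_pos; lra.
Qed.

Lemma lub_ge (E : R -> Prop) r : (forall η, 0 < η -> exists x, E x /\ r - η < x) ->
  Rbar_le r (Lub_Rbar E).
Proof.
  intros H. destruct (Lub_Rbar_correct E) as [Hub _].
  destruct (Lub_Rbar E) as [l| |] eqn:EL; simpl; auto.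
  - apply Rnot_lt_le. intros Hl. destruct (H (r - l)) as [x [Ex Hx]]; [lra|].
    specialize (Hub x Ex). simpl in Hub. lra.
  - destruct (H 1) as [x [Ex _]]; [lra|]. specialize (Hub x Ex). simpl in Hub. auto.
Qed.

Lemma lub_le (E : R -> Prop) r : (forall x, E x -> x <= r) -> Rbar_le (Lub_Rbar E) r.
Proof.
  intros H. destruct (Lub_Rbar_correct E) as [_ Hl]. apply Hl. intros x Ex. simpl. auto.
Qed.

Lemma glb_le (E : R -> Prop) r : (forall η, 0 < η -> exists x, E x /\ x < r + η) ->
  Rbar_le (Glb_Rbar E) r.
Proof.
  intros H. destruct (Glb_Rbar_correct E) as [Hlb _].
  destruct (Glb_Rbar E) as [l| |] eqn:EL; simpl; auto.
  - apply Rnot_lt_le. intros Hl. destruct (H (l - r)) as [x [Ex Hx]]; [lra|].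
    specialize (Hlb x Ex). simpl in Hlb. lra.
  - destruct (H 1) as [x [Ex _]]; [lra|]. specialize (Hlb x Ex). simpl in Hlb. auto.
Qed.

Lemma glb_ge (E : R -> Prop) r : (forall x, E x -> r <= x) -> Rbar_le r (Glb_Rbar E).
Proof.
  intros H. destruct (Glb_Rbar_correct E) as [_ Hl]. apply Hl. intros x Ex. simpl. auto.
Qed.

Lemma final Phi dPhi Psi dPsi p0 pinf eps eta :
  0 < eta < eps ->
  filterlim (lquot Phi dPhi) (at_right 0) (locally p0) ->
  filterlim (lquot Phi dPhi) (Rbar_locally p_infty) (locally pinf) ->
  (forall t, 0 < t -> Rmin p0 pinf - eta <= lquot Psi dPsi t <= Rmax p0 pinf + eta) ->
  (exists d, 0 < d /\ forall t, 0 < t < d -> lquot Psi dPsi t = lquot Phi dPhi t) ->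
  (exists N, forall t, N < t -> lquot Psi dPsi t = lquot Phi dPhi t) ->
    Rbar_le (Rmax p0 pinf) (p_exp Psi dPsi) /\
    Rbar_lt (p_exp Psi dPsi) (Rmax p0 pinf + eps) /\
    Rbar_lt (Rmin p0 pinf - eps) (q_exp Psi dPsi) /\
    Rbar_le (q_exp Psi dPsi) (Rmin p0 pinf).
Proof.
  intros He H0 Hinf Hb [d [Hd Ed]] [N EN].
  set (E := fun x => exists t, 0 < t /\ x = lquot Psi dPsi t).
  assert (W0 : forall η, 0 < η -> exists x, E x /\ Rabs (x - p0) < η).
  { intros η Hη. destruct (ar0_elim _ _ H0 η Hη) as [d' [Hd' Hh]].
    exists (lquot Psi dPsi (Rmin d d' / 2)). split.
    exists (Rmin d d' / 2). split; auto. apply Rlt_gt, Rdiv_lt_0_compat; [apply Rmin_glb_lt|]; lra.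
    assert (0 < Rmin d d') by (apply Rmin_glb_lt; lra).
    rewrite Ed. apply Hh. split. lra. pose proof (Rmin_r d d'); lra.
    split. lra. pose proof (Rmin_l d d'); lra. }
  assert (Winf : forall η, 0 < η -> exists x, E x /\ Rabs (x - pinf) < η).
  { intros η Hη. destruct (pinf_elim _ _ Hinf η Hη) as [N' HN].
    exists (lquot Psi dPsi (Rmax (Rmax N N') 0 + 1)). split.
    exists (Rmax (Rmax N N') 0 + 1). split; auto. pose proof (Rmax_r (Rmax N N') 0); lra.
    pose proof (Rmax_l (Rmax N N') 0). pose proof (Rmax_l N N'). pose proof (Rmax_r N N').
    rewrite EN by lra. apply HN. lra. }
  unfold p_exp, q_exp. fold E.
  split; [|split; [|split]].
  - apply lub_ge. intros η Hη. unfold Rmax. destruct (Rle_dec p0 pinf).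
    + destruct (Winf η Hη) as [x [Ex Hx]]. exists x. split; auto.
      apply Rabs_lt_between in Hx; lra.
    + destruct (W0 η Hη) as [x [Ex Hx]]. exists x. split; auto.
      apply Rabs_lt_between in Hx; lra.
  - apply (Rbar_le_lt_trans _ (Rmax p0 pinf + eta)). apply lub_le.
    intros x [t [Ht ->]]. apply Hb; auto. simpl; lra.
  - apply (Rbar_lt_le_trans _ (Rmin p0 pinf - eta)). simpl; lra. apply glb_ge.
    intros x [t [Ht ->]]. apply Hb; auto.
  - apply glb_le. intros η Hη. unfold Rmin. destruct (Rle_dec p0 pinf).
    + destruct (W0 η Hη) as [x [Ex Hx]]. exists x. split; auto.
      apply Rabs_lt_between in Hx; lra.
    + destruct (Winf η Hη) as [x [Ex Hx]]. exists x. split; auto.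
      apply Rabs_lt_between in Hx; lra.
Qed.

Lemma cross_lem fb fx gz gb x b z D1 D2 : x < b -> b < z ->
  fb - fx <= D1 * (b - x) -> D1 <= D2 -> D2 * (z - b) <= gz - gb ->
  (fb - fx) * (z - b) <= (gz - gb) * (b - x).
Proof. intros Hxb Hbz H1 H2 H3.
  apply (Rle_trans _ (D1 * (b - x) * (z - b))). apply Rmult_le_compat_r; lra.
  apply (Rle_trans _ (D2 * (z - b) * (b - x))). 
  replace (D2 * (z - b) * (b - x)) with (D2 * (b - x) * (z - b)) by ring.
  apply Rmult_le_compat_r; [lra|]. apply Rmult_le_compat_r; lra.
  apply Rmult_le_compat_r; lra. Qed.

Lemma convR_mono f lo lo' : lo <= lo' -> convR f lo -> convR f lo'.
Proof. intros H Hf x y z Hx. apply Hf. lra. Qed.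

Lemma young_mono Phi : young Phi -> forall x y, 0 <= x <= y -> Phi x <= Phi y.
Proof.
  intros [Hc [H0 [Hp _]]] x y Hxy.
  destruct (Req_dec y 0) as [Hy|Hy]. { replace x with y by lra. lra. }
  specialize (Hc y 0 (x / y) ltac:(lra) ltac:(lra)).
  assert (0 <= x / y <= 1).
  { split. apply Rmult_le_pos; [lra|]. apply Rlt_le, Rinv_0_lt_compat; lra.
    apply (Rmult_le_reg_r y); [lra|]. unfold Rdiv. rewrite Rmult_assoc, Rinv_l; lra. }
  specialize (Hc H). replace (x / y * y + (1 - x / y) * 0) with x in Hc by (field; lra).
  rewrite H0 in Hc. assert (0 < Phi y) by (apply Hp; lra). nra.
Qed.

Lemma Rpower_pos' x c : 0 < Rpower x c.
Proof. unfold Rpower. apply exp_pos. Qed.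

Lemma Rpower_succ x c : 0 < x -> Rpower x (c - 1) * x = Rpower x c.
Proof.
  intros Hx. rewrite <- (Rpower_1 x) at 2 by auto. rewrite <- Rpower_plus.
  f_equal. ring.
Qed.

Lemma caseA Phi dPhi p0 pinf eta d0 M :
  young Phi -> (forall t, 0 < t -> is_right_deriv Phi t (dPhi t)) ->
  0 < eta -> 0 < d0 -> 0 < M ->
  (forall t, 0 < t < d0 -> Rabs (lquot Phi dPhi t - p0) < eta) ->
  (forall t, M <= t -> Rabs (lquot Phi dPhi t - pinf) < eta) ->
  1 < lquot Phi dPhi M ->
  exists Psi dPsi : R -> R,
    young Psi /\ (forall t, 0 < t -> is_right_deriv Psi t (dPsi t)) /\
    young_equiv Phi Psi /\
    (forall t, 0 < t -> Rmin p0 pinf - eta <= lquot Psi dPsi t <= Rmax p0 pinf + eta) /\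
    (exists d, 0 < d /\ forall t, 0 < t < d -> lquot Psi dPsi t = lquot Phi dPhi t) /\
    (exists N, forall t, N < t -> lquot Psi dPsi t = lquot Phi dPhi t).
Proof.
  intros HY HdPhi Heta Hd0 HM Hd HMt HaM.
  pose proof HY as [Hcv [H00 [Hpos Hgrow]]].
  assert (Hc : convR Phi 0) by (apply young_convR; auto).
  set (p := Rmax p0 pinf). set (q := Rmin p0 pinf).
  assert (Hqp0 : q <= p0) by apply Rmin_l. assert (Hqpi : q <= pinf) by apply Rmin_r.
  assert (Hpp0 : p0 <= p) by apply Rmax_l. assert (Hppi : pinf <= p) by apply Rmax_r.
  set (c := p + eta).
  set (D := dPhi M). set (PM := Phi M).
  assert (HPM : 0 < PM) by (apply Hpos; auto).
  assert (HaMe : Rabs (lquot Phi dPhi M - pinf) < eta) by (apply HMt; lra).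
  apply Rabs_lt_between in HaMe.
  unfold lquot in HaM, HaMe. fold D PM in HaM, HaMe.
  assert (HMD : PM < M * D).
  { apply (Rmult_lt_reg_r (/ PM)). apply Rinv_0_lt_compat; auto.
    rewrite Rinv_r by lra. exact HaM. }
  assert (HD : 0 < D) by nra.
  assert (HcaM : M * D < c * PM).
  { apply (Rmult_lt_reg_r (/ PM)). apply Rinv_0_lt_compat; auto.
    replace (c * PM * / PM) with c by (field; lra). unfold c. lra. }
  assert (Hc1 : 1 < c) by nra.
  set (e := M - PM / D).
  assert (He : 0 < e).
  { unfold e. apply Rlt_0_minus. apply (Rmult_lt_reg_r D); auto.
    unfold Rdiv. rewrite Rmult_assoc, Rinv_l by lra. lra. }
  set (v := e * c / (c - 1)).
  assert (Hv0 : 0 < v) by (unfold v; apply Rdiv_lt_0_compat; nra).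
  assert (Hve : v * (c - 1) = e * c) by (unfold v; field; lra).
  assert (Hev : e < v) by (apply (Rmult_lt_reg_r (c-1)); [lra|]; rewrite Hve; nra).
  assert (HvM : v < M).
  { apply (Rmult_lt_reg_r (c - 1)); [lra|]. rewrite Hve. unfold e.
    assert (PM / D * c > M) .
    { apply (Rmult_lt_reg_r D); auto. unfold Rdiv.
      replace (PM * / D * c * D) with (c * PM) by (field; lra). lra. }
    nra. }
  set (δ := Rmin (d0 / 2) (v / 2)).
  assert (Hδ0 : 0 < δ) by (apply Rmin_glb_lt; lra).
  assert (Hδv : δ < v) by (pose proof (Rmin_r (d0/2) (v/2)); unfold δ in *; lra).
  assert (Hδd : δ < d0) by (pose proof (Rmin_l (d0/2) (v/2)); unfold δ in *; lra).
  set (A := Phi δ / Rpower δ c).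
  assert (HPd : 0 < Phi δ) by (apply Hpos; auto).
  assert (HA : 0 < A) by (apply Rdiv_lt_0_compat; auto; apply Rpower_pos').
  set (β := c * A * Rpower v (c - 1)).
  assert (Hβ : 0 < β).
  { unfold β. apply Rmult_lt_0_compat; [apply Rmult_lt_0_compat; lra|apply Rpower_pos']. }
  set (K := β / D).
  assert (HK : 0 < K) by (apply Rdiv_lt_0_compat; auto).
  set (Pw := fun s => A * Rpower s c).
  set (Ln := fun s => β * (s - e)).
  set (KP := fun s => K * Phi s).
  set (H2 := glue Ln KP M). set (H1 := glue Pw H2 v). set (Psi := glue Phi H1 δ).
  assert (Eδ : Phi δ = Pw δ).
  { unfold Pw, A. field. apply Rgt_not_eq, Rpower_pos'. }
  assert (Ev : Pw v = Ln v).
  { unfold Pw, Ln, β. rewrite <- (Rpower_succ v c) by lra.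
    assert (v - e = v / c).
    { apply (Rmult_eq_reg_r c); [|lra]. replace (v / c * c) with v by (field; lra).
      rewrite Rmult_minus_distr_r, <- Hve. ring. }
    rewrite H. field. lra. }
  assert (EM : Ln M = KP M).
  { unfold Ln, KP, K, e. fold PM. field. lra. }
  assert (E2v : Pw v = H2 v) by (unfold H2; rewrite glue_l by lra; auto).
  assert (E1δ : Phi δ = H1 δ) by (unfold H1; rewrite glue_l by lra; auto).
  assert (V1 : forall t, t <= δ -> Psi t = Phi t) by (intros; unfold Psi; apply glue_l; auto).
  assert (V2 : forall t, δ <= t <= v -> Psi t = Pw t).
  { intros t Ht. unfold Psi. rewrite glue_r' by (auto; lra). unfold H1. apply glue_l. lra. }
  assert (V3 : forall t, v <= t <= M -> Psi t = Ln t).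
  { intros t Ht. unfold Psi. rewrite glue_r' by (auto; lra). unfold H1.
    rewrite glue_r' by (auto; lra). unfold H2. apply glue_l. lra. }
  assert (V4 : forall t, M <= t -> Psi t = KP t).
  { intros t Ht. unfold Psi. rewrite glue_r' by (auto; lra). unfold H1.
    rewrite glue_r' by (auto; lra). unfold H2. rewrite glue_r' by (auto; lra). auto. }
  set (dPsi := fun t => if Rlt_dec t δ then dPhi t else if Rlt_dec t v then A * (c * Rpower t (c - 1))
                 else if Rlt_dec t M then β else K * dPhi t).
  assert (rdPw : forall t, 0 < t -> is_right_deriv Pw t (A * (c * Rpower t (c - 1)))).
  { intros t Ht. apply rd_scale. apply rd_pow. auto. }
  assert (rdKP : forall t, 0 < t -> is_right_deriv KP t (K * dPhi t)).
  { intros t Ht. apply rd_scale. auto. }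
  assert (rdLn : forall t, is_right_deriv Ln t β) by (intros; apply rd_line).
  assert (HKD : K * D = β) by (unfold K; field; lra).
  assert (HPwv : A * (c * Rpower v (c - 1)) = β) by (unfold β; ring).
  assert (HRD : forall t, 0 < t -> is_right_deriv Psi t (dPsi t)).
  { intros t Ht. unfold dPsi.
    destruct (Rlt_dec t δ). { apply rd_glue_left; auto. }
    apply rd_glue_right; [lra|auto|].
    destruct (Rlt_dec t v). { apply rd_glue_left; auto. }
    apply rd_glue_right; [lra|auto|].
    destruct (Rlt_dec t M). { apply rd_glue_left; auto. }
    apply rd_glue_right; [lra|auto|]. apply rdKP; auto. }
  assert (CKP : convR KP 0) by (apply convR_scale; [lra|auto]).
  assert (CH2 : convR H2 v).
  { apply glue_conv; auto. apply convR_line. apply (convR_mono _ 0); [lra|auto].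
    intros x z Hx Hxz Hz. apply (cross_lem _ _ _ _ x M z β β); auto; try lra.
    unfold Ln; right; ring.
    rewrite <- HKD. apply (rd_right KP 0); [auto|lra|lra|apply rdKP; lra]. }
  assert (CH1 : convR H1 δ).
  { apply glue_conv; auto. apply convR_scale; [lra|]. apply convR_pow; lra.
    intros x z Hx Hxz Hz. apply (cross_lem _ _ _ _ x v z β β); auto; try lra.
    rewrite <- HPwv. apply (rd_left Pw δ); [apply convR_scale; [lra|apply convR_pow; lra]|lra|lra|apply rdPw; lra].
    apply (rd_right H2 v); [auto|lra|lra|]. unfold H2. apply rd_glue_left; auto. }
  assert (CPsi : convR Psi 0).
  { apply glue_conv; auto.
    intros x z Hx Hxz Hz. apply (cross_lem _ _ _ _ x δ z (dPhi δ) (A * (c * Rpower δ (c - 1)))); auto.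
    apply (rd_left Phi 0); [auto|lra|lra|apply HdPhi; lra].
    -
      assert (Hq := Hd δ ltac:(lra)). apply Rabs_lt_between in Hq. unfold lquot in Hq.
      assert (Hq2 : δ * dPhi δ / Phi δ < c) by (unfold c; lra).
      assert (Hq3 : δ * dPhi δ < c * Phi δ).
      { apply (Rmult_lt_reg_r (/ Phi δ)). apply Rinv_0_lt_compat; auto.
        replace (c * Phi δ * / Phi δ) with c by (field; lra). exact Hq2. }
      rewrite Eδ in Hq3. unfold Pw in Hq3. rewrite <- (Rpower_succ δ c) in Hq3 by lra.
      apply Rlt_le. apply (Rmult_lt_reg_l δ); auto. nra.
    - apply (rd_right H1 δ); [auto|lra|lra|]. unfold H1. apply rd_glue_left; [lra|]. apply rdPw; lra. }
  exists Psi, dPsi.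
  split; [|split; [auto|split; [|split; [|split]]]].
  -
    split; [apply convR_young; auto|split; [rewrite V1; lra|split]].
    + intros t Ht. destruct (Rle_dec t δ). rewrite V1; auto.
      destruct (Rle_dec t v). rewrite V2 by lra. unfold Pw. apply Rmult_lt_0_compat; [lra|apply Rpower_pos'].
      destruct (Rle_dec t M). rewrite V3 by lra. unfold Ln. apply Rmult_lt_0_compat; lra.
      rewrite V4 by lra. unfold KP. pose proof (Hpos t Ht). nra.
    + apply grow_intro. intros B. destruct (grow_elim _ Hgrow (B / K)) as [N HN].
      exists (Rmax N M). intros t Ht. pose proof (Rmax_l N M); pose proof (Rmax_r N M).
      rewrite V4 by lra. unfold KP. specialize (HN t ltac:(lra)).
      apply (Rmult_lt_reg_l (/ K)). apply Rinv_0_lt_compat; auto.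
      rewrite <- Rmult_assoc, Rinv_l, Rmult_1_l by lra. rewrite Rmult_comm. exact HN.
  -
    set (m := Phi δ). set (U := K * PM).
    assert (Hm : 0 < m) by auto.
    set (C := Rmax (Rmax 1 K) (Rmax (/ K) (Rmax (PM / m) (U / m)))).
    assert (C1 : 1 <= C) by (unfold C; pose proof (Rmax_l 1 K); pose proof (Rmax_l (Rmax 1 K) (Rmax (/ K) (Rmax (PM / m) (U / m)))); lra).
    assert (CK : K <= C) by (unfold C; pose proof (Rmax_r 1 K); pose proof (Rmax_l (Rmax 1 K) (Rmax (/ K) (Rmax (PM / m) (U / m)))); lra).
    assert (CiK : / K <= C).
    { unfold C. pose proof (Rmax_l (/ K) (Rmax (PM / m) (U / m))); pose proof (Rmax_r (Rmax 1 K) (Rmax (/ K) (Rmax (PM / m) (U / m)))); lra. }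
    assert (CPM : PM / m <= C).
    { unfold C. pose proof (Rmax_l (PM / m) (U / m)). pose proof (Rmax_r (/ K) (Rmax (PM / m) (U / m))); pose proof (Rmax_r (Rmax 1 K) (Rmax (/ K) (Rmax (PM / m) (U / m)))); lra. }
    assert (CU : U / m <= C).
    { unfold C. pose proof (Rmax_r (PM / m) (U / m)). pose proof (Rmax_r (/ K) (Rmax (PM / m) (U / m))); pose proof (Rmax_r (Rmax 1 K) (Rmax (/ K) (Rmax (PM / m) (U / m)))); lra. }
    assert (Hc0 : 0 < C) by lra.
    exists C. split; auto. intros t Ht.
    assert (Hph : 0 <= Phi t) by (destruct (Req_dec t 0); [subst; lra|apply Rlt_le, Hpos; lra]).
    assert (G : Psi t <= C * Phi t /\ Phi t <= C * Psi t).
    { destruct (Rle_dec t δ) as [h1|h1].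
      { rewrite V1 by auto. nra. }
      destruct (Rle_dec t M) as [h2|h2].
      - assert (Pm1 : m <= Phi t) by (apply young_mono; auto; lra).
        assert (Pm2 : Phi t <= PM) by (apply young_mono; auto; lra).
        assert (Q : m <= Psi t <= U).
        { assert (PwB : forall s, δ <= s <= v -> m <= Pw s <= Pw v).
          { intros s Hs. unfold m; rewrite Eδ. unfold Pw. split; apply Rmult_le_compat_l; try lra;
            apply Rle_Rpower_l; lra. }
          assert (EU : U = Ln M) by (rewrite EM; reflexivity).
          assert (LnMono : forall x y, x <= y -> Ln x <= Ln y).
          { intros x y Hxy. unfold Ln. apply Rmult_le_compat_l; lra. }
          assert (LnM : Ln v <= U) by (rewrite EU; apply LnMono; lra).
          destruct (Rle_dec t v).
          - rewrite V2 by lra. specialize (PwB t ltac:(lra)). lra.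
          - rewrite V3 by lra. specialize (PwB v ltac:(lra)). rewrite Ev in PwB.
            pose proof (LnMono v t ltac:(lra)). pose proof (LnMono t M ltac:(lra)).
            rewrite EU. lra. }
        split.
        + apply (Rle_trans _ U); [lra|]. replace U with (U / m * m) by (field; lra).
          apply (Rle_trans _ (C * m)). apply Rmult_le_compat_r; lra. apply Rmult_le_compat_l; lra.
        + apply (Rle_trans _ PM); [lra|]. replace PM with (PM / m * m) by (field; lra).
          apply (Rle_trans _ (C * m)). apply Rmult_le_compat_r; lra. apply Rmult_le_compat_l; lra.
      - rewrite V4 by lra. unfold KP. split. nra.
        assert (1 <= C * K).
        { apply (Rmult_le_reg_r (/ K)). apply Rinv_0_lt_compat; auto.
          replace (C * K * / K) with C by (field; lra). lra. }
        nra. }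
    split; [|tauto]. destruct G as [G _].
    apply (Rmult_le_reg_l C); auto. rewrite <- Rmult_assoc, Rinv_r, Rmult_1_l by lra. auto.
  -
    intros t Ht. fold p q. unfold lquot.
    destruct (Rlt_dec t δ) as [h1|h1].
    { rewrite V1 by lra. unfold dPsi. destruct (Rlt_dec t δ); [|lra].
      specialize (Hd t ltac:(lra)). apply Rabs_lt_between in Hd. unfold lquot in Hd. unfold c; split; lra. }
    destruct (Rlt_dec t v) as [h2|h2].
    { rewrite V2 by lra. unfold dPsi. destruct (Rlt_dec t δ); [lra|]. destruct (Rlt_dec t v); [|lra].
      unfold Pw. replace (t * (A * (c * Rpower t (c - 1))) / (A * Rpower t c)) with c.
      unfold c; split; lra. rewrite <- (Rpower_succ t c) by lra.
      assert (Rpower t (c - 1) <> 0) by (apply Rgt_not_eq, Rpower_pos').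
      field. repeat split; auto; lra. }
    destruct (Rlt_dec t M) as [h3|h3].
    { rewrite V3 by lra. unfold dPsi. destruct (Rlt_dec t δ); [lra|]. destruct (Rlt_dec t v); [lra|].
      destruct (Rlt_dec t M); [|lra]. unfold Ln.
      replace (t * β / (β * (t - e))) with (t / (t - e)) by (field; lra).
      assert (Hte : 0 < t - e) by nra.
      split.
      - assert (Hq1 : M / (M - e) <= t / (t - e)).
        { apply divle; try lra. assert (e * t <= e * M) by (apply Rmult_le_compat_l; lra). nra. }
        assert (Hq2 : M / (M - e) = M * D / PM) by (unfold e; field; lra). lra.
      - assert (Hq3 : t / (t - e) <= c).
        { apply (Rmult_le_reg_r (t - e)); auto. unfold Rdiv. rewrite Rmult_assoc, Rinv_l by lra. nra. }
        unfold c, p, q in *. lra. }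
    rewrite V4 by lra. unfold dPsi. destruct (Rlt_dec t δ); [lra|]. destruct (Rlt_dec t v); [lra|].
    destruct (Rlt_dec t M); [lra|]. unfold KP.
    assert (0 < Phi t) by (apply Hpos; lra).
    replace (t * (K * dPhi t) / (K * Phi t)) with (lquot Phi dPhi t) by (unfold lquot; field; lra).
    specialize (HMt t ltac:(lra)). apply Rabs_lt_between in HMt. unfold c; split; lra.
  - exists δ. split; auto. intros t Ht. unfold lquot. rewrite V1 by lra. unfold dPsi.
    destruct (Rlt_dec t δ); [auto|lra].
  - exists M. intros t Ht. unfold lquot. rewrite V4 by lra. unfold dPsi.
    destruct (Rlt_dec t δ); [lra|]. destruct (Rlt_dec t v); [lra|].
    destruct (Rlt_dec t M); [lra|]. unfold KP.
    assert (0 < Phi t) by (apply Hpos; lra). field. split; lra.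
Qed.

Lemma caseB Phi dPhi p0 pinf eta d0 M :
  young Phi -> (forall t, 0 < t -> is_right_deriv Phi t (dPhi t)) ->
  0 < eta -> 0 < d0 -> 0 < M ->
  (forall t, 0 < t < d0 -> Rabs (lquot Phi dPhi t - p0) < eta) ->
  (forall t, M <= t -> Rabs (lquot Phi dPhi t - pinf) < eta) ->
  lquot Phi dPhi M <= 1 ->
  exists Psi dPsi : R -> R,
    young Psi /\ (forall t, 0 < t -> is_right_deriv Psi t (dPsi t)) /\
    young_equiv Phi Psi /\
    (forall t, 0 < t -> Rmin p0 pinf - eta <= lquot Psi dPsi t <= Rmax p0 pinf + eta) /\
    (exists d, 0 < d /\ forall t, 0 < t < d -> lquot Psi dPsi t = lquot Phi dPhi t) /\
    (exists N, forall t, N < t -> lquot Psi dPsi t = lquot Phi dPhi t).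
Proof.
  intros HY HdPhi Heta Hd0 HM Hd HMt HaM.
  pose proof HY as [Hcv [H00 [Hpos Hgrow]]].
  assert (Hc : convR Phi 0) by (apply young_convR; auto).
  set (D := dPhi M). set (PM := Phi M).
  assert (HPM : 0 < PM) by (apply Hpos; auto).
  set (D' := PM / M).
  assert (HD'M : D' * M = PM) by (unfold D'; field; lra).
  assert (HDD : D <= D').
  { unfold lquot in HaM. fold D PM in HaM.
    assert (M * D <= PM).
    { apply (Rmult_le_reg_r (/ PM)). apply Rinv_0_lt_compat; auto.
      rewrite Rinv_r by lra. exact HaM. }
    apply (Rmult_le_reg_r M); auto. lra. }
  assert (Lin : forall s, 0 <= s <= M -> Phi s = D' * s).
  { intros s Hs. apply Rle_antisym.
    - assert (0 <= s / M <= 1).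
      { split. apply Rmult_le_pos; [lra|]. apply Rlt_le, Rinv_0_lt_compat; lra.
        apply (Rmult_le_reg_r M); [lra|]. unfold Rdiv. rewrite Rmult_assoc, Rinv_l; lra. }
      specialize (Hcv M 0 (s / M) ltac:(lra) ltac:(lra) H).
      replace (s / M * M + (1 - s / M) * 0) with s in Hcv by (field; lra).
      rewrite H00 in Hcv. fold PM in Hcv. unfold D'. 
      replace (PM / M * s) with (s / M * PM) by (field; lra). lra.
    - destruct (Req_dec s M) as [->|Hs'].
      { fold PM. lra. }
      assert (R1 := rd_left Phi 0 s M D Hc ltac:(lra) ltac:(lra) (HdPhi M HM)).
      fold PM in R1.
      assert (D * (M - s) <= D' * (M - s)) by (apply Rmult_le_compat_r; lra).
      nra. }
  assert (Q1 : forall t, 0 < t < M -> lquot Phi dPhi t = 1).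
  { intros t Ht.
    assert (Ev : at_right 0 (fun h => (Phi (t + h) - Phi t) / h = D')).
    { apply (ev_ar0 _ (M - t)); [lra|]. intros h Hh.
      rewrite !Lin by lra. field. lra. }
    assert (E1 : dPhi t <= D').
    { apply (lim_le _ _ _ (HdPhi t ltac:(lra))).
      eapply filter_imp; [|exact Ev]. intros h ->; lra. }
    assert (E2 : D' <= dPhi t).
    { apply (lim_ge _ _ _ (HdPhi t ltac:(lra))).
      eapply filter_imp; [|exact Ev]. intros h ->; lra. }
    assert (dPhi t = D') by lra.
    unfold lquot. rewrite H, Lin by lra.
    assert (0 < D') by (unfold D'; apply Rdiv_lt_0_compat; lra).
    field. lra. }
  assert (H1 : Rabs (1 - p0) < eta).
  { assert (0 < Rmin d0 M) by (apply Rmin_glb_lt; lra).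
    pose proof (Rmin_l d0 M). pose proof (Rmin_r d0 M).
    rewrite <- (Q1 (Rmin d0 M / 2)) by lra. apply Hd. lra. }
  apply Rabs_lt_between in H1.
  exists Phi, dPhi. split; [auto|split; [auto|split; [|split; [|split]]]].
  - exists 1. split; [lra|]. intros t Ht.
    assert (0 <= Phi t) by (destruct (Req_dec t 0); [subst; lra|apply Rlt_le, Hpos; lra]).
    rewrite Rinv_1. lra.
  - intros t Ht. pose proof (Rmin_l p0 pinf). pose proof (Rmin_r p0 pinf).
    pose proof (Rmax_l p0 pinf). pose proof (Rmax_r p0 pinf).
    destruct (Rlt_dec t M).
    + rewrite Q1 by lra. split; lra.
    + specialize (HMt t ltac:(lra)). apply Rabs_lt_between in HMt. split; lra.
  - exists 1. split; auto; lra.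
  - exists 0. auto.
Qed.

Theorem mainTheorem11 (Phi dPhi : R -> R) (p0 pinf : R)
  (HPhi : young Phi)
  (HdPhi : forall t, 0 < t -> is_right_deriv Phi t (dPhi t))
  (H0 : filterlim (lquot Phi dPhi) (at_right 0) (locally p0))
  (Hinf : filterlim (lquot Phi dPhi) (Rbar_locally p_infty) (locally pinf)) :
  forall eps, 0 < eps ->
  exists Psi dPsi : R -> R,
    young Psi /\
    (forall t, 0 < t -> is_right_deriv Psi t (dPsi t)) /\
    young_equiv Phi Psi /\
    Rbar_le (Rmax p0 pinf) (p_exp Psi dPsi) /\
    Rbar_lt (p_exp Psi dPsi) (Rmax p0 pinf + eps) /\
    Rbar_lt (Rmin p0 pinf - eps) (q_exp Psi dPsi) /\
    Rbar_le (q_exp Psi dPsi) (Rmin p0 pinf).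
Proof.
  intros eps Heps.
  set (eta := eps / 2).
  assert (Heta : 0 < eta) by (unfold eta; lra).
  destruct (ar0_elim _ _ H0 eta Heta) as [d0 [Hd0 Hd]].
  destruct (pinf_elim _ _ Hinf eta Heta) as [M0 HM0].
  set (M := Rmax M0 0 + 1).
  assert (HM : 0 < M) by (unfold M; pose proof (Rmax_r M0 0); lra).
  assert (HMt : forall t, M <= t -> Rabs (lquot Phi dPhi t - pinf) < eta).
  { intros t Ht. apply HM0. unfold M in Ht. pose proof (Rmax_l M0 0). lra. }
  assert (Hc : exists Psi dPsi : R -> R,
    young Psi /\ (forall t, 0 < t -> is_right_deriv Psi t (dPsi t)) /\
    young_equiv Phi Psi /\
    (forall t, 0 < t -> Rmin p0 pinf - eta <= lquot Psi dPsi t <= Rmax p0 pinf + eta) /\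
    (exists d, 0 < d /\ forall t, 0 < t < d -> lquot Psi dPsi t = lquot Phi dPhi t) /\
    (exists N, forall t, N < t -> lquot Psi dPsi t = lquot Phi dPhi t)).
  { destruct (Rle_dec (lquot Phi dPhi M) 1).
    - apply (caseB Phi dPhi p0 pinf eta d0 M); auto.
    - apply (caseA Phi dPhi p0 pinf eta d0 M); auto. lra. }
  destruct Hc as [Psi [dPsi [Y [RD [EQ [B [N0 Ninf]]]]]]].
  exists Psi, dPsi. split; [auto|split; [auto|split; [auto|]]].
  apply (final Phi dPhi Psi dPsi p0 pinf eps eta); auto.
  unfold eta; lra.
Qed.
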